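(* For every positive integer $T$ divisible by $4$, \[\sum_{t=1}^{T/4}\big(T-4(t-1)\big)\binom{T+1}{2t-1}=2^{T-1}+\frac T2\binom{T}{T/2}.\] *)

(* Defs.v *)
From mathcomp Require Import all_boot.

(* Main.v *)
Require Import Defs.
From mathcomp Require Import all_boot.
From mathcomp Require Import zify.
Lemma L1 m s : s < m -> (4*m - 4*s) * 'C((4*m).+1, (2*s).+1) + (4*m).+1 * 'C(4*m, 2*s)
  = (4*m).+1 * 'C(4*m, (2*s).+1) + 'C((4*m).+1, (2*s).+1).
Proof.
move=> hs.
have h1 := mul_bin_diag (4*m).+1 (2*s). have h2 := mul_bin_down (4*m).+1 (2*s).+1.
rewrite /= in h1 h2. rewrite h1 h2.
move: ('C(_, _)) => X. nia.
Qed.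
Lemma L2 n M : \sum_(t < M.+1) 'C(n.+1, 2*t) = \sum_(t < M) 'C(n.+1, (2*t).+1) + 'C(n, 2*M).
Proof.
elim: M => [|M IH]; first by rewrite big_ord1 big_ord0 !muln0 !bin0.
rewrite big_ord_recr /= IH big_ord_recr /=.
have -> : 2 * M.+1 = (2*M).+2 by rewrite mulnS.
rewrite !binS. lia.
Qed.
Lemma L4 (F : nat -> nat) M : \sum_(j < 2*M) F j = \sum_(s < M) (F (2*s) + F (2*s).+1).
Proof.
elim: M => [|M IH]; first by rewrite muln0 !big_ord0.
have -> : 2 * M.+1 = (2*M).+2 by rewrite mulnS.
by rewrite !big_ord_recr /= IH addnA.
Qed.
Lemma L3 k : 2 * \sum_(j<k) 'C(2*k, j) + 'C(2*k, k) = 2^(2*k).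
Proof.
have := expnDn 1 1 (2*k). rewrite add1n => ->.
rewrite -(big_mkord xpredT (fun i => 'C(2*k, i) * (1 ^ (2*k - i) * 1 ^ i))).
rewrite (big_cat_nat _ (n:=k)) //=; last lia.
rewrite (big_cat_nat _ (m:=k) (n:=k.+1)) //=; last lia.
rewrite big_nat1 big_mkord.
rewrite (big_addn 0 _ k.+1).
have -> : (2*k).+1 - k.+1 = k by lia.
rewrite big_nat_rev /= add0n big_mkord.
rewrite !exp1n !muln1.
have E1 : \sum_(i < k) 'C(2 * k, i) * (1 ^ (2 * k - i) * 1 ^ i) = \sum_(j < k) 'C(2 * k, j).
  by apply: eq_bigr => i _; rewrite !exp1n !muln1.
have E2 : \sum_(i < k) 'C(2 * k, k - i.+1 + k.+1) *
      (1 ^ (2 * k - (k - i.+1 + k.+1)) * 1 ^ (k - i.+1 + k.+1)) = \sum_(j < k) 'C(2 * k, j).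
  apply: eq_bigr => i _; rewrite !exp1n !muln1.
  have hi := ltn_ord i.
  rewrite -(bin_sub (n:=2*k) (m:=i)); last lia.
  congr 'C(_, _); lia.
rewrite E1 E2 mul2n -addnn -addnA; congr (_ + _); exact: addnC.
Qed.
Theorem lemma8 (T : nat) (hT : 0 < T) (h4 : 4 %| T) :
  \sum_(1 <= t < (T %/ 4).+1) (T - 4 * (t - 1)) * 'C(T.+1, (2 * t).-1)
  = 2 ^ (T - 1) + (T %/ 2) * 'C(T, T %/ 2).
Proof.
move: hT; case/dvdnP: h4 => m -> hT.
have -> : m * 4 %/ 4 = m by rewrite mulnK.
have -> : m * 4 %/ 2 = 2 * m by rewrite -(mulnK (2*m) (isT : 0 < 2)); congr divn; lia.
have -> : m * 4 = 4 * m by rewrite mulnC.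
have m0 : 0 < m by lia.
rewrite (big_addn 0 _ 1) subn1 /= big_mkord.
set S := \sum_(i < m) _.
have -> : S = \sum_(s < m) (4*m - 4*s) * 'C((4*m).+1, (2*s).+1).
  apply: eq_bigr => i _; rewrite addn1 subn1 /=; congr (_ * 'C(_, _)); lia.
clear S.
set S := \sum_(s < m) _.
set E := \sum_(s < m) 'C(4*m, 2*s).
set O := \sum_(s < m) 'C(4*m, (2*s).+1).
set C := 'C(4*m, 2*m).
have H1 : S + (4*m).+1 * E = (4*m).+1 * O + \sum_(s < m) 'C((4*m).+1, (2*s).+1).
  rewrite /S /E /O !big_distrr -!big_split /=.
  by apply: eq_bigr => i _; apply: L1; exact: ltn_ord.
have H5 : \sum_(s < m) 'C((4*m).+1, (2*s).+1) = E + O.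
  rewrite /E /O -big_split /=; apply: eq_bigr => i _; by rewrite binS addnC.
have H4 := L3 (2*m).
rewrite L4 -/E -/O in H4.
rewrite (_ : 2 * (2 * m) = 4 * m) in H4; last lia.
rewrite -/C in H4.
clear hT; case: m m0 @S @E @O @C H1 H5 H4 => [//|p] _ S E O C H1 H5 H4.
have H2 := L2 (4*p+3) p.+1.
have e4 : (4*p+3).+1 = 4 * p.+1 by lia.
rewrite e4 big_ord_recr /= -/E -/O in H2.
have H3 : 2 * 'C(4*p+3, 2*p.+1) = C.
  rewrite /C -e4.
  have -> : 2 * p.+1 = (2*p+1).+1 by lia.
  have Hs : 'C(4*p+3, (2*p+1).+1) = 'C(4*p+3, 2*p+1).
    rewrite -(bin_sub (n:=4*p+3) (m:=(2*p+1).+1)); last lia.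
    congr 'C(_, _); lia.
  rewrite binS Hs; lia.
have -> : 4 * p.+1 - 1 = (4*p+3) by lia.
have e2 : 2 ^ (4 * p.+1) = 2 * 2 ^ (4*p+3) by rewrite -expnS; congr (_ ^ _); lia.
rewrite e2 in H4.
rewrite big_split /= -/E -/O in H4.
rewrite -/C in H2. rewrite H5 in H1.
clearbody S E O C.
move: H2 H3; set h := 'C(_, _) => H2 H3.
have H2' := congr1 (muln (4*p.+1).+1) H2.
rewrite !mulnDr in H2'.
rewrite -H3. rewrite -H3 in H2' H4.
nia.
Qed.
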